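(* Let $g$ solve system (S3) with initial data $h_{ii}>0$ satisfying $4h_{11}<h_{22}=h_{33}$. Then the solution exists for all $t\ge 0$, $g_{22}=g_{33}$ for all $t$, $g_{22}$ and $g_{33}$ are increasing, and as $t\to\infty$: $g_{00}\to0$, $g_{11}\to0$, $g_{22},g_{33}\to\infty$. Moreover $(g_{00}g_{22}^3 - 4\det h)\,g_{00}^3g_{22} = \kappa$ for all $t$, where $\kappa = (h_{00}h_{22}^3-4\det h)\,h_{00}^3h_{22}$.
   Context: Let $\det h = h_{00}h_{11}h_{22}h_{33}$, $\beta=\frac{1}{6(\det h)^2}$, and $p(x,y,z) = x^4 - x^3(y+z) + x^2yz + x(-y^3+y^2z+yz^2-z^3) + y^4 - y^3z - yz^3 + z^4$, $q(x,y,z) = 5x^4 - 3x^3(y+z) + x^2yz + x(y^3-y^2z-yz^2+z^3) - 3y^4 + 3y^3z + 3yz^3 - 3z^4$. System (S3): $\dot g_{00} = -\beta\,p(g_{11},g_{22},g_{33})\,g_{00}^3$, $\dot g_{11} = -\beta\,q(g_{11},g_{22},g_{33})\,g_{00}^2g_{11}$, $\dot g_{22} = -\beta\,q(g_{22},g_{33},g_{11})\,g_{00}^2g_{22}$, $\dot g_{33} = -\beta\,q(g_{33},g_{11},g_{22})\,g_{00}^2g_{33}$, $g_{ii}(0)=h_{ii}$. This is Bach flow on $\mathbb{R}\times\mathbb{S}^3$ in a diagonalizing left-invariant frame with $[e_i,e_j]=\sum_k\varepsilon_{ijk}e_k$; along the flow $g_{00}g_{11}g_{22}g_{33}=\det h$.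 *)

(* Defs.v *)
From Stdlib Require Import Reals.
Open Scope R_scope.

Definition p (x y z : R) : R :=
  x^4 - x^3*(y+z) + x^2*y*z + x*(-y^3 + y^2*z + y*z^2 - z^3)
  + y^4 - y^3*z - y*z^3 + z^4.

Definition q (x y z : R) : R :=
  5*x^4 - 3*x^3*(y+z) + x^2*y*z + x*(y^3 - y^2*z - y*z^2 + z^3)
  - 3*y^4 + 3*y^3*z + 3*y*z^3 - 3*z^4.

Definition deth (h00 h11 h22 h33 : R) : R := h00*h11*h22*h33.

Definition beta (h00 h11 h22 h33 : R) : R := 1 / (6 * (deth h00 h11 h22 h33)^2).

Definition solves_S3_on_nonneg (h00 h11 h22 h33 : R) (g0 g1 g2 g3 : R -> R) : Prop :=
  g0 0 = h00 /\ g1 0 = h11 /\ g2 0 = h22 /\ g3 0 = h33 /\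
  forall t : R, 0 <= t ->
    derivable_pt_lim g0 t
      (- beta h00 h11 h22 h33 * p (g1 t) (g2 t) (g3 t) * (g0 t)^3) /\
    derivable_pt_lim g1 t
      (- beta h00 h11 h22 h33 * q (g1 t) (g2 t) (g3 t) * (g0 t)^2 * g1 t) /\
    derivable_pt_lim g2 t
      (- beta h00 h11 h22 h33 * q (g2 t) (g3 t) (g1 t) * (g0 t)^2 * g2 t) /\
    derivable_pt_lim g3 t
      (- beta h00 h11 h22 h33 * q (g3 t) (g1 t) (g2 t) * (g0 t)^2 * g3 t).

Definition tends_to_at_infty (f : R -> R) (l : R) : Prop :=
  forall eps : R, 0 < eps -> exists T : R, forall t : R, T <= t -> Rabs (f t - l) < eps.

Definition tends_to_pinfty (f : R -> R) : Prop :=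
  forall M : R, exists T : R, forall t : R, T <= t -> M < f t.

(* Main.v *)
Require Import Defs.
From Coquelicot Require Import Coquelicot.
From Stdlib Require Import Reals Lra Psatz Ranalysis5.
Open Scope R_scope.

Ltac elim_sq e H :=
  repeat match goal with
  | |- context [e ^ ?n] =>
     let m := eval compute in (Nat.div n 2) in
     let r := eval compute in (Nat.modulo n 2) in
     lazymatch r with
     | O => replace (e ^ n) with ((e*e)^m) by ring
     | _ => replace (e ^ n) with ((e*e)^m * e) by ring
     end
  end; rewrite ?H.

Definition G1 K v := K * sqrt v * sqrt (1 - v^4).
Definition G2 K v := 4*K*sqrt v / sqrt (1-v^4).
Definition G0 K D v := D * sqrt (1-v^4) / (16*K^3*(sqrt v)^3).
Definition vel K v := 1/(768*K^2)*(3+v^4)*(1-v^4)^2.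

Lemma v4lt v : 0 < v < 1 -> 0 < 1 - v^4.
Proof. intros Hv. assert (v^4 < 1). { apply pow_lt_1_compat; [lra|lia]. } lra. Qed.

Ltac fixsq v := replace (1 + - (v*(v*(v*(v*1))))) with (1 - v^4) by ring.

Lemma dG1 K v : 0 < v < 1 -> is_derive (G1 K) v
   (K * (sqrt (1-v^4)/(2*sqrt v) - 4*v^3*sqrt v/(2*sqrt (1-v^4)))).
Proof.
intros Hv. pose proof (v4lt v Hv).
unfold G1. auto_derive.
- repeat split; lra.
- fixsq v. assert (0 < sqrt v) by (apply sqrt_lt_R0; lra).
  assert (0 < sqrt (1-v^4)) by (apply sqrt_lt_R0; lra).
  field. split; lra.
Qed.
Lemma dG2 K v : 0 < v < 1 -> is_derive (G2 K) v
   (4*K * (1/(2*sqrt v * sqrt (1-v^4)) + 4*v^3*sqrt v/(2*sqrt (1-v^4)^3))).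
Proof.
intros Hv. pose proof (v4lt v Hv).
assert (0 < sqrt v) by (apply sqrt_lt_R0; lra).
assert (0 < sqrt (1-v^4)) by (apply sqrt_lt_R0; lra).
unfold G2. auto_derive.
- fixsq v. repeat split; lra.
- fixsq v. field. split; lra.
Qed.
Lemma dG0 K D v : 0 < K -> 0 < v < 1 -> is_derive (G0 K D) v
   (D/(16*K^3) * (- 4*v^3/(2*sqrt (1-v^4) * sqrt v ^3) - 3 * sqrt (1-v^4)/(2 * sqrt v ^5))).
Proof.
intros HK Hv. pose proof (v4lt v Hv).
assert (0 < sqrt v) by (apply sqrt_lt_R0; lra).
assert (0 < sqrt (1-v^4)) by (apply sqrt_lt_R0; lra).
unfold G0. auto_derive.
- repeat split; try lra; apply Rgt_not_eq; repeat apply Rmult_lt_0_compat; lra.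
- fixsq v. field. split; lra.
Qed.

Lemma sq_sqrt' x : 0 <= x -> sqrt x * sqrt x = x.
Proof. intros; apply sqrt_sqrt; auto. Qed.

Lemma idG1 K D v : 0 < K -> 0 < D -> 0 < v < 1 ->
  K * (sqrt (1-v^4)/(2*sqrt v) - 4*v^3*sqrt v/(2*sqrt (1-v^4))) * vel K v
  = - (1/(6*D^2)) * q (G1 K v) (G2 K v) (G2 K v) * (G0 K D v)^2 * G1 K v.
Proof.
intros HK HD Hv. pose proof (v4lt v Hv).
assert (0 < sqrt v) by (apply sqrt_lt_R0; lra).
assert (0 < sqrt (1-v^4)) by (apply sqrt_lt_R0; lra).
assert (Hw: sqrt v * sqrt v = v) by (apply sqrt_sqrt; lra).
assert (He: sqrt (1-v^4) * sqrt (1-v^4) = 1 - (sqrt v * sqrt v)^4) by (rewrite Hw; apply sqrt_sqrt; lra).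
unfold G1, G2, G0, vel, q.
set (w := sqrt v) in *. set (e := sqrt (1 - v^4)) in *. rewrite <- Hw.
field_simplify_eq; [| repeat split; lra].
elim_sq e He. ring.
Qed.

Ltac idtac_pre K D v :=
  let H := fresh in pose proof (v4lt v ltac:(assumption)) as H;
  assert (0 < sqrt v) by (apply sqrt_lt_R0; lra);
  assert (0 < sqrt (1-v^4)) by (apply sqrt_lt_R0; lra);
  let Hw := fresh in assert (Hw: sqrt v * sqrt v = v) by (apply sqrt_sqrt; lra);
  let He := fresh in assert (He: sqrt (1-v^4) * sqrt (1-v^4) = 1 - (sqrt v * sqrt v)^4) by (rewrite Hw; apply sqrt_sqrt; lra);
  unfold G1, G2, G0, vel, q, p;
  set (w := sqrt v) in *; set (e := sqrt (1 - v^4)) in *; rewrite <- Hw;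
  field_simplify_eq; [ elim_sq e He; ring | repeat split; lra].

Lemma idG2 K D v : 0 < K -> 0 < D -> 0 < v < 1 ->
  4*K * (1/(2*sqrt v * sqrt (1-v^4)) + 4*v^3*sqrt v/(2*sqrt (1-v^4)^3)) * vel K v
  = - (1/(6*D^2)) * q (G2 K v) (G2 K v) (G1 K v) * (G0 K D v)^2 * G2 K v.
Proof. intros HK HD Hv. idtac_pre K D v. Qed.
Lemma idG3 K D v : 0 < K -> 0 < D -> 0 < v < 1 ->
  4*K * (1/(2*sqrt v * sqrt (1-v^4)) + 4*v^3*sqrt v/(2*sqrt (1-v^4)^3)) * vel K v
  = - (1/(6*D^2)) * q (G2 K v) (G1 K v) (G2 K v) * (G0 K D v)^2 * G2 K v.
Proof. intros HK HD Hv. idtac_pre K D v. Qed.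
Lemma idG0 K D v : 0 < K -> 0 < D -> 0 < v < 1 ->
  D/(16*K^3) * (- 4*v^3/(2*sqrt (1-v^4) * sqrt v ^3) - 3 * sqrt (1-v^4)/(2 * sqrt v ^5)) * vel K v
  = - (1/(6*D^2)) * p (G1 K v) (G2 K v) (G2 K v) * (G0 K D v)^3.
Proof. intros HK HD Hv. idtac_pre K D v. Qed.

Lemma cosh_pos u : 0 < cosh u.
Proof. unfold cosh. pose proof (exp_pos u); pose proof (exp_pos (-u)). lra. Qed.

Lemma tanh_bd u : -1 < tanh u < 1.
Proof.
unfold tanh, sinh, cosh. pose proof (exp_pos u); pose proof (exp_pos (-u)).
split; apply Rmult_lt_reg_r with ((exp u + exp (- u)) / 2); try lra;
 field_simplify; lra.
Qed.

Lemma tanh_pos u : 0 < u -> 0 < tanh u.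
Proof.
intros. unfold tanh. apply Rdiv_lt_0_compat; [|apply cosh_pos].
pose proof (sinh_lt 0 u H). rewrite sinh_0 in H0. lra.
Qed.

Lemma tanh_deriv u : derivable_pt_lim tanh u (1 - tanh u ^ 2).
Proof.
pose proof (cosh_pos u).
assert (H1 := derivable_pt_lim_div sinh cosh u (cosh u) (sinh u)
  (derivable_pt_lim_sinh u) (derivable_pt_lim_cosh u) ltac:(lra)).
replace (1 - tanh u ^2) with ((cosh u * cosh u - sinh u * sinh u) / Rsqr (cosh u)).
- exact H1.
- unfold tanh, Rsqr. field. lra.
Qed.

Lemma cpt_of_dl f x l : derivable_pt_lim f x l -> continuity_pt f x.
Proof. intros H. apply derivable_continuous_pt. exists l. exact H. Qed.

Section Constr.
Variable c : R.
Hypothesis Hc : 0 < c.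
Definition Qf (v : R) := c*(3+v^4)*(1-v^4)*(1+v^2).
Definition phi (u : R) := / Qf (tanh u).

Lemma Qf_bd v : -1 < v < 1 -> 0 < Qf v <= 8 * c.
Proof.
intros Hv. unfold Qf.
assert (0 <= v^2) by (apply pow2_ge_0).
assert (v^2 < 1) by nra.
assert (v^4 = v^2*v^2) by ring.
assert (0 <= v^4) by nra. assert (v^4 < 1) by nra.
split.
- repeat apply Rmult_lt_0_compat; lra.
- assert (0 < (3+v^4)*(1-v^4)) by nra.
  assert ((3+v^4)*(1-v^4) <= 4) by nra.
  assert ((3+v^4)*(1-v^4)*(1+v^2) <= 8) by nra.
  nra.
Qed.

Lemma phi_lb u : / (8*c) <= phi u.
Proof.
unfold phi. destruct (Qf_bd (tanh u) (tanh_bd u)).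
apply Rinv_le_contravar; lra.
Qed.

Lemma phi_cont u : continuous phi u.
Proof.
apply continuity_pt_filterlim.
unfold phi.
destruct (Qf_bd (tanh u) (tanh_bd u)).
apply continuity_pt_inv; [|lra].
pose proof (proj2 (is_derive_Reals _ _ _) (tanh_deriv u)) as Ht.
assert (Hq : is_derive Qf (tanh u) (c*(4*tanh u^3*(1-tanh u^4)*(1+tanh u^2) - (3+tanh u^4)*(4*tanh u^3)*(1+tanh u^2) + (3+tanh u^4)*(1-tanh u^4)*(2*tanh u)))).
{ unfold Qf. auto_derive; [auto | ring]. }
assert (Hc2 := is_derive_comp Qf tanh u _ _ Hq Ht).
exact (cpt_of_dl _ _ _ (proj1 (is_derive_Reals _ _ _) Hc2)).
Qed.

Definition Tm (s0 s : R) := RInt phi s0 s.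

Lemma Tm_deriv s0 s : is_derive (Tm s0) s (phi s).
Proof.
apply is_derive_RInt with (a := s0).
- apply filter_forall. intros b. apply RInt_correct. apply ex_RInt_continuous.
  intros; apply phi_cont.
- apply phi_cont.
Qed.

Lemma Tm_dl s0 s : derivable_pt_lim (Tm s0) s (phi s).
Proof. apply is_derive_Reals, Tm_deriv. Qed.

Lemma Tm_lower s0 a b : a <= b -> (b - a) / (8*c) <= Tm s0 b - Tm s0 a.
Proof.
intros Hab. destruct (Req_dec a b) as [->|Hne].
- unfold Rdiv. rewrite Rminus_diag, Rmult_0_l, Rminus_diag; lra.
- destruct (MVT_cor2 (Tm s0) phi a b ltac:(lra) (fun x _ => Tm_dl s0 x)) as [x [Hx _]].
  rewrite Hx. pose proof (phi_lb x).
  unfold Rdiv. rewrite Rmult_comm. apply Rmult_le_compat_r; lra.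
Qed.

Lemma Tm_s0 s0 : Tm s0 s0 = 0.
Proof. unfold Tm. rewrite RInt_point. reflexivity. Qed.

Lemma Tm_cont s0 : continuity (Tm s0).
Proof. intros x. apply (cpt_of_dl _ _ _ (Tm_dl s0 x)). Qed.

Lemma Tm_surj s0 t : {s | Tm s0 s = t}.
Proof.
set (m := / (8*c)).
assert (Hm : 0 < m) by (unfold m; apply Rinv_0_lt_compat; lra).
set (L := Rabs t / m + 1).
assert (HL : 0 < L) by (unfold L; pose proof (Rabs_pos t); assert (0 <= Rabs t / m) by (apply Rdiv_le_0_compat; lra); lra).
assert (H1 := Tm_lower s0 s0 (s0 + L) ltac:(lra)).
assert (H2 := Tm_lower s0 (s0 - L) s0 ltac:(lra)).
rewrite Tm_s0 in H1, H2.
assert (HmL : m * L = Rabs t + m) by (unfold L; field; lra).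
assert (Hab := Rabs_le_between' t t 0). 
pose proof (Rle_abs t). pose proof (Rle_abs (-t)). rewrite Rabs_Ropp in *.
destruct (IVT (fun s => Tm s0 s - t) (s0 - L) (s0 + L)) as [z [_ Hz]].
- apply continuity_minus; [apply Tm_cont | apply continuity_const; intros ? ?; reflexivity].
- lra.
- replace ((s0 - (s0 - L)) / (8*c)) with (m*L) in H2 by (unfold m; field; lra). lra.
- replace ((s0 + L - s0) / (8*c)) with (m*L) in H1 by (unfold m; field; lra). lra.
- exists z. lra.
Qed.

End Constr.

Lemma inv_deriv (T S : R -> R) (m t d : R) : 0 < m ->
  (forall x, T (S x) = x) ->
  (forall a b, Rabs (S a - S b) <= Rabs (a - b) / m) ->
  derivable_pt_lim T (S t) d -> 0 < d -> derivable_pt_lim S t (/ d).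
Proof.
intros Hm HTS HL HT Hd eps Heps.
set (e' := Rmin (d/2) (eps*d*d/4)).
assert (He' : 0 < e') by (unfold e'; apply Rmin_pos; [lra | assert (0 < eps*d*d) by (repeat apply Rmult_lt_0_compat; lra); lra]).
destruct (HT e' He') as [del Hdel].
assert (Hmd : 0 < m * del) by (apply Rmult_lt_0_compat; [lra | apply cond_pos]).
exists (mkposreal _ Hmd). simpl. intros k Hk0 Hk.
set (h := S (t + k) - S t).
assert (Hh0 : h <> 0).
{ intro E. apply Hk0. assert (S (t+k) = S t) by (unfold h in E; lra).
  assert (T (S (t+k)) = T (S t)) by (rewrite H; reflexivity).
  rewrite !HTS in H0. lra. }
assert (Hhd : Rabs h < del).
{ unfold h. eapply Rle_lt_trans; [apply HL|].
  replace (t + k - t) with k by ring.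
  apply Rmult_lt_reg_r with m; [lra|]. unfold Rdiv. rewrite Rmult_assoc, Rinv_l, Rmult_1_r; lra. }
specialize (Hdel h Hh0 Hhd).
replace (S t + h) with (S (t+k)) in Hdel by (unfold h; ring).
rewrite !HTS in Hdel.
replace (t + k - t) with k in Hdel by ring.
set (z := k / h) in *.
replace (h / k) with (/ z) by (unfold z; field; split; auto).
apply Rabs_def2 in Hdel. destruct Hdel as [Hz1 Hz2].
assert (e' <= d/2) by apply Rmin_l.
assert (e' <= eps*d*d/4) by apply Rmin_r.
assert (Hz : d/2 < z) by lra.
assert (Hzp : 0 < z) by lra.
replace (/ z - / d) with ((d - z) / (z * d)) by (field; lra).
assert (Hzd : 0 < z * d) by nra.
assert (eps * d * d / 2 <= eps * (z*d)) by nra. assert (0 < eps*d*d) by (repeat apply Rmult_lt_0_compat; lra).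
apply Rabs_def1.
- apply (Rmult_lt_reg_r (z*d)); [lra|].
  replace ((d - z) / (z*d) * (z*d)) with (d-z) by (field; repeat split; lra). lra.
- apply (Rmult_lt_reg_r (z*d)); [lra|].
  replace ((d - z) / (z*d) * (z*d)) with (d-z) by (field; repeat split; lra). lra.
Qed.

Lemma tanh_s0 v0 : 0 < v0 < 1 -> tanh (ln ((1+v0)/(1-v0)) / 2) = v0.
Proof.
intros Hv. set (s := ln ((1+v0)/(1-v0)) / 2).
assert (HE : exp s * exp s = (1+v0)/(1-v0)).
{ rewrite <- exp_plus. replace (s + s) with (ln ((1+v0)/(1-v0))) by (unfold s; field).
  apply exp_ln. apply Rdiv_lt_0_compat; lra. }
unfold tanh, sinh, cosh. rewrite exp_Ropp.
pose proof (exp_pos s). assert (0 < / exp s) by (apply Rinv_0_lt_compat; lra). assert (0 < exp s * exp s) by nra.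
replace ((exp s - / exp s) / 2 / ((exp s + / exp s) / 2)) with ((exp s * exp s - 1)/(exp s * exp s + 1)) by (field; repeat split; lra).
rewrite HE. field. lra.
Qed.

Lemma s0_pos v0 : 0 < v0 < 1 -> 0 < ln ((1+v0)/(1-v0)) / 2.
Proof.
intros Hv. assert (1 < (1+v0)/(1-v0)).
{ apply (Rmult_lt_reg_r (1-v0)); [lra|]. replace ((1+v0)/(1-v0)*(1-v0)) with (1+v0) by (field; lra). lra. }
pose proof (ln_increasing 1 _ ltac:(lra) H) as H0. rewrite ln_1 in H0. lra.
Qed.

Lemma existence (h00 h11 h22 h33 : R) :
  0 < h00 -> 0 < h11 -> 0 < h22 -> 0 < h33 ->
  4 * h11 < h22 -> h22 = h33 ->
  exists g0 g1 g2 g3 : R -> R, solves_S3_on_nonneg h00 h11 h22 h33 g0 g1 g2 g3.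
Proof.
intros H0 H1 H2 H3 H4 H5. subst h33.
set (A := 1 - 4*h11/h22).
assert (HA : 0 < A < 1).
{ unfold A. split.
  - assert (4*h11/h22 < 1) by (apply (Rmult_lt_reg_r h22); [lra|]; field_simplify; lra). lra.
  - assert (0 < 4*h11/h22) by (apply Rdiv_lt_0_compat; lra). lra. }
set (v0 := sqrt (sqrt A)).
assert (Hv04 : v0^4 = A).
{ unfold v0. replace (sqrt (sqrt A) ^ 4) with ((sqrt (sqrt A) * sqrt (sqrt A)) * (sqrt (sqrt A) * sqrt (sqrt A))) by ring.
  rewrite sqrt_sqrt by (apply sqrt_pos). apply sqrt_sqrt; lra. }
assert (Hv0 : 0 < v0 < 1).
{ assert (0 < v0) by (unfold v0; apply sqrt_lt_R0, sqrt_lt_R0; lra).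
  split; auto. destruct (Rlt_or_le v0 1) as [|Hge]; auto.
  assert (1 <= v0^4) by (replace 1 with (1^4) by ring; apply pow_incr; lra). lra. }
set (w0 := sqrt v0). set (e0 := sqrt (1 - v0^4)).
assert (Hw0 : 0 < w0) by (apply sqrt_lt_R0; lra).
assert (He0 : 0 < e0) by (apply sqrt_lt_R0; apply v4lt; lra).
assert (Hww : w0 * w0 = v0) by (apply sqrt_sqrt; lra).
assert (Hee : e0 * e0 = 4*h11/h22) by (unfold e0; rewrite sqrt_sqrt; [rewrite Hv04; unfold A; ring | pose proof (v4lt v0 Hv0); lra]).
set (K := h11 / (w0 * e0)).
assert (HK : 0 < K) by (unfold K; apply Rdiv_lt_0_compat; [lra | apply Rmult_lt_0_compat; lra]).
set (D := deth h00 h11 h22 h22).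
assert (HD : 0 < D) by (unfold D, deth; repeat apply Rmult_lt_0_compat; lra).
set (c := 1/(768*K^2)).
assert (Hc : 0 < c) by (unfold c; apply Rdiv_lt_0_compat; [lra|]; nra).
set (s0 := ln ((1+v0)/(1-v0)) / 2).
set (S := fun t => proj1_sig (Tm_surj c Hc s0 t)).
assert (HTS : forall t, Tm c s0 (S t) = t) by (intro t; unfold S; destruct (Tm_surj c Hc s0 t); auto).
assert (Hmono : forall a b, a < b -> Tm c s0 a < Tm c s0 b).
{ intros a b Hab. pose proof (Tm_lower c Hc s0 a b ltac:(lra)).
  assert (0 < (b-a)/(8*c)) by (apply Rdiv_lt_0_compat; lra). lra. }
assert (Hinj : forall a b, Tm c s0 a = Tm c s0 b -> a = b).
{ intros a b E. destruct (Rtotal_order a b) as [Hl|[Hl|Hl]]; auto;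
  [pose proof (Hmono _ _ Hl) | pose proof (Hmono _ _ Hl)]; lra. }
assert (HS0 : S 0 = s0) by (apply Hinj; rewrite HTS, Tm_s0; reflexivity).
assert (Hs0 : 0 < s0) by (apply s0_pos; auto).
assert (HSpos : forall t, 0 <= t -> s0 <= S t).
{ intros t Ht. destruct (Rlt_or_le (S t) s0) as [Hl|]; auto.
  pose proof (Hmono _ _ Hl). rewrite HTS, Tm_s0 in H. lra. }
assert (HLip : forall a b, Rabs (S a - S b) <= Rabs (a - b) / / (8*c)).
{ intros a b. replace (Rabs (a - b) / / (8*c)) with (8*c*Rabs (a-b)) by (field; lra).
  destruct (Rle_or_lt (S a) (S b)) as [Hl|Hl].
  - pose proof (Tm_lower c Hc s0 _ _ Hl) as H. rewrite !HTS in H.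
    rewrite (Rabs_minus_sym (S a)), (Rabs_minus_sym a).
    assert (0 <= b - a) by (assert (0 <= (S b - S a)/(8*c)) by (apply Rdiv_le_0_compat; lra); lra).
    rewrite !Rabs_right by lra.
    replace (S b - S a) with (8*c*((S b - S a)/(8*c))) by (field; lra).
    apply Rmult_le_compat_l; lra.
  - pose proof (Tm_lower c Hc s0 _ _ (Rlt_le _ _ Hl)) as H. rewrite !HTS in H.
    assert (0 <= a - b) by (assert (0 <= (S a - S b)/(8*c)) by (apply Rdiv_le_0_compat; lra); lra).
    rewrite !Rabs_right by lra.
    replace (S a - S b) with (8*c*((S a - S b)/(8*c))) by (field; lra).
    apply Rmult_le_compat_l; lra. }
assert (HSd : forall t, derivable_pt_lim S t (Qf c (tanh (S t)))).
{ intro t. replace (Qf c (tanh (S t))) with (/ phi c (S t)).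
  - assert (0 < /(8*c)) by (apply Rinv_0_lt_compat; lra).
    pose proof (phi_lb c Hc (S t)).
    apply (inv_deriv (Tm c s0) S (/(8*c))); [lra | exact HTS | exact HLip | apply (Tm_dl c Hc) | lra].
  - unfold phi. rewrite Rinv_inv. reflexivity. }
set (V := fun t => tanh (S t)).
assert (HVd : forall t, is_derive V t (vel K (V t))).
{ intro t. apply is_derive_Reals.
  replace (vel K (V t)) with ((1 - tanh (S t) ^ 2) * Qf c (tanh (S t))).
  - apply (derivable_pt_lim_comp S tanh). apply HSd. apply tanh_deriv.
  - unfold V, vel, Qf, c. ring. }
assert (HV0 : V 0 = v0) by (unfold V; rewrite HS0; apply tanh_s0; auto).
assert (HVr : forall t, 0 <= t -> 0 < V t < 1).
{ intros t Ht. unfold V. split; [apply tanh_pos; pose proof (HSpos t Ht); lra | apply tanh_bd]. }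
exists (fun t => G0 K D (V t)), (fun t => G1 K (V t)), (fun t => G2 K (V t)), (fun t => G2 K (V t)).
unfold solves_S3_on_nonneg. split; [|split; [|split; [|split]]].
- rewrite HV0. unfold G0. fold w0 e0. unfold K, D, deth. field_simplify_eq; [|repeat split; lra]. elim_sq e0 Hee. field. lra.
- rewrite HV0. unfold G1. fold w0 e0. unfold K. field. split; lra.
- rewrite HV0. unfold G2. fold w0 e0. unfold K. field_simplify_eq; [|repeat split; lra]. elim_sq e0 Hee. field. lra.
- rewrite HV0. unfold G2. fold w0 e0. unfold K. field_simplify_eq; [|repeat split; lra]. elim_sq e0 Hee. field. lra.
- intros t Ht. pose proof (HVr t Ht) as Hv.
  assert (Hb : beta h00 h11 h22 h22 = 1/(6*D^2)) by reflexivity.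
  rewrite Hb.
  repeat split; apply is_derive_Reals.
  + assert (Hd := is_derive_comp (G0 K D) V t _ _ (dG0 K D (V t) HK Hv) (HVd t)).
    rewrite <- (idG0 K D (V t) HK HD Hv).
    unfold scal in Hd; simpl in Hd; unfold mult in Hd; simpl in Hd.
    rewrite Rmult_comm. exact Hd.
  + assert (Hd := is_derive_comp (G1 K) V t _ _ (dG1 K (V t) Hv) (HVd t)).
    rewrite <- (idG1 K D (V t) HK HD Hv).
    unfold scal in Hd; simpl in Hd; unfold mult in Hd; simpl in Hd.
    rewrite Rmult_comm. exact Hd.
  + assert (Hd := is_derive_comp (G2 K) V t _ _ (dG2 K (V t) Hv) (HVd t)).
    rewrite <- (idG2 K D (V t) HK HD Hv).
    unfold scal in Hd; simpl in Hd; unfold mult in Hd; simpl in Hd.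
    rewrite Rmult_comm. exact Hd.
  + assert (Hd := is_derive_comp (G2 K) V t _ _ (dG2 K (V t) Hv) (HVd t)).
    rewrite <- (idG3 K D (V t) HK HD Hv).
    unfold scal in Hd; simpl in Hd; unfold mult in Hd; simpl in Hd.
    rewrite Rmult_comm. exact Hd.
Qed.

Notation DL := derivable_pt_lim.
Lemma dl_ext f x l l' : DL f x l -> l = l' -> DL f x l'.
Proof. intros H ->; exact H. Qed.
Lemma dl_mult f g x a b : DL f x a -> DL g x b -> DL (fun y => f y * g y) x (a * g x + f x * b).
Proof. intros; apply (derivable_pt_lim_mult f g x a b); auto. Qed.
Lemma dl_plus f g x a b : DL f x a -> DL g x b -> DL (fun y => f y + g y) x (a + b).
Proof. intros; apply (derivable_pt_lim_plus f g x a b); auto. Qed.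
Lemma dl_minus f g x a b : DL f x a -> DL g x b -> DL (fun y => f y - g y) x (a - b).
Proof. intros; apply (derivable_pt_lim_minus f g x a b); auto. Qed.
Lemma dl_const a x : DL (fun _ => a) x 0.
Proof. apply derivable_pt_lim_const. Qed.
Lemma dl_id x : DL (fun y => y) x 1.
Proof. apply derivable_pt_lim_id. Qed.
Lemma dl_pow f x a n : DL f x a -> DL (fun y => f y ^ n) x (INR n * f x ^ (pred n) * a).
Proof. intros H. 
  replace (INR n * f x ^ (pred n) * a) with ((INR n * f x ^ (pred n)) * a) by ring.
  apply (derivable_pt_lim_comp f (fun y => y ^ n) x a). auto. apply derivable_pt_lim_pow. Qed.
Lemma dl_exp f x a : DL f x a -> DL (fun y => exp (f y)) x (exp (f x) * a).
Proof. intros H. apply (derivable_pt_lim_comp f exp x a). auto. apply derivable_pt_lim_exp. Qed.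
Lemma dl_div f g x a b : DL f x a -> DL g x b -> g x <> 0 ->
  DL (fun y => f y / g y) x ((a * g x - b * f x) / (g x)^2).
Proof. intros. replace ((g x)^2) with (Rsqr (g x)) by (unfold Rsqr; ring).
  apply (derivable_pt_lim_div f g x a b); auto. Qed.

Ltac dl_solve := repeat first
  [ apply dl_mult | apply dl_plus | apply dl_minus | apply dl_pow | apply dl_exp
  | apply dl_const | apply dl_id | eassumption ].

Lemma cpt_mult f g x : continuity_pt f x -> continuity_pt g x -> continuity_pt (fun y => f y * g y) x.
Proof. apply continuity_pt_mult. Qed.
Lemma cpt_plus f g x : continuity_pt f x -> continuity_pt g x -> continuity_pt (fun y => f y + g y) x.
Proof. apply continuity_pt_plus. Qed.
Lemma cpt_minus f g x : continuity_pt f x -> continuity_pt g x -> continuity_pt (fun y => f y - g y) x.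
Proof. apply continuity_pt_minus. Qed.
Lemma cpt_opp f x : continuity_pt f x -> continuity_pt (fun y => - f y) x.
Proof. apply continuity_pt_opp. Qed.
Lemma cpt_const a x : continuity_pt (fun _ => a) x.
Proof. apply continuity_pt_const. intros ? ?; reflexivity. Qed.
Lemma cpt_pow f x n : continuity_pt f x -> continuity_pt (fun y => f y ^ n) x.
Proof. intros H. induction n.
- simpl. apply cpt_const.
- simpl. apply cpt_mult; auto. Qed.
Ltac cpt_solve := repeat first
  [ apply cpt_mult | apply cpt_plus | apply cpt_minus | apply cpt_opp | apply cpt_pow
  | apply cpt_const | eassumption ].

Lemma cpt_of_dl' f x l : DL f x l -> continuity_pt f x.
Proof. intros H. apply derivable_continuous_pt. exists l. exact H. Qed.

Lemma keep_pos f t : 0 <= t -> (forall c, 0 <= c <= t -> continuity_pt f c) -> 0 < f 0 ->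
  (forall c, 0 <= c <= t -> f c <> 0) -> 0 < f t.
Proof.
intros Ht Hc H0 Hnz. destruct (Rlt_le_dec 0 (f t)) as [|Hle]; auto.
destruct (Req_dec t 0) as [->|Ht0]; [lra|].
assert (f t < 0) by (destruct Hle; auto; exfalso; apply (Hnz t); lra).
destruct (IVT_interv (fun x => - f x) 0 t) as [z [Hz Hfz]].
- intros a Ha. apply cpt_opp. apply Hc. lra.
- lra.
- lra.
- lra.
- exfalso. apply (Hnz z Hz). lra.
Qed.

Lemma pow8_lt a b : 0 < a -> 0 < b -> a^8 < b^8 -> a < b.
Proof. intros Ha Hb H. destruct (Rlt_le_dec a b) as [|Hle]; auto.
  assert (b^8 <= a^8) by (apply pow_incr; lra). lra. Qed.

Lemma eventually_big (r : R -> R) r0 m : 0 < m -> (forall t, 0 <= t -> r0 + m*t <= r t) ->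
  forall B, exists T, forall t, T <= t -> 0 <= t /\ B < r t.
Proof.
intros Hm H B. exists (Rmax 0 ((B - r0)/m) + 1). intros t Ht.
pose proof (Rmax_l 0 ((B-r0)/m)). pose proof (Rmax_r 0 ((B-r0)/m)).
split; [lra|]. pose proof (H t ltac:(lra)).
assert ((B - r0)/m < t) by lra.
assert (B - r0 < m * t).
{ apply (Rmult_lt_compat_l m) in H3; [|lra]. replace (m * ((B - r0)/m)) with (B - r0) in H3 by (field; lra). lra. }
lra.
Qed.

Definition Rpoly x y z := 5*z^4 + 5*y*z^3 + 4*y^2*z^2 + 5*y^3*z + 5*y^4 - 3*x*z^3 - 5*x*y*z^2
  - 5*x*y^2*z - 3*x*y^3 - x^2*y*z + x^3*z + x^3*y - 3*x^4.
Lemma idR x y z : q y z x * y - q z x y * z = (y - z) * Rpoly x y z.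
Proof. unfold q, Rpoly; ring. Qed.

Lemma universal (h00 h11 h22 : R) (g0 g1 g2 g3 : R -> R) :
  0 < h00 -> 0 < h11 -> 0 < h22 -> 4 * h11 < h22 ->
  solves_S3_on_nonneg h00 h11 h22 h22 g0 g1 g2 g3 ->
     (forall t, 0 <= t -> g2 t = g3 t) /\
     (forall s t, 0 <= s -> s < t -> g2 s < g2 t) /\
     (forall s t, 0 <= s -> s < t -> g3 s < g3 t) /\
     tends_to_at_infty g0 0 /\
     tends_to_at_infty g1 0 /\
     tends_to_pinfty g2 /\
     tends_to_pinfty g3 /\
     (forall t, 0 <= t ->
        (g0 t * (g2 t)^3 - 4 * deth h00 h11 h22 h22) * (g0 t)^3 * g2 t
        = (h00 * h22^3 - 4 * deth h00 h11 h22 h22) * h00^3 * h22).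
Proof.
intros H0 H1 H2 H4 [I0 [I1 [I2 [I3 Hd]]]].
set (D := deth h00 h11 h22 h22) in *.
set (b := beta h00 h11 h22 h22) in *.
assert (HD : 0 < D) by (unfold D, deth; repeat apply Rmult_lt_0_compat; lra).
assert (Hb : b = 1/(6*D^2)) by reflexivity.
assert (Hbp : 0 < b) by (rewrite Hb; apply Rdiv_lt_0_compat; [lra|]; nra).
assert (HDdef : D = h00*h11*h22*h22) by reflexivity.
clearbody D b.
assert (Hc : forall c, 0 <= c -> continuity_pt g0 c /\ continuity_pt g1 c /\ continuity_pt g2 c /\ continuity_pt g3 c).
{ intros c Hc. destruct (Hd c Hc) as [d0 [d1 [d2 d3]]].
  repeat split; eapply cpt_of_dl'; eassumption. }
assert (Heq : forall t, 0 <= t -> g2 t = g3 t).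
{ intros t Ht. destruct (Req_dec t 0) as [->|Ht0]; [lra|].
  set (A := fun c => - b * g0 c ^ 2 * Rpoly (g1 c) (g2 c) (g3 c)).
  destruct (continuity_ab_maj A 0 t ltac:(lra)) as [Mx [HM _]].
  { intros c Hc'. destruct (Hc c ltac:(lra)) as [c0 [c1 [c2 c3]]]. unfold A, Rpoly. cpt_solve. }
  set (M := A Mx) in *.
  set (phi := fun c => (g2 c - g3 c)^2 * exp (-(2*M)*c)).
  set (phi' := fun c => 2 * (g2 c - g3 c)^2 * exp (-(2*M)*c) * (A c - M)).
  assert (Hphi : forall c, 0 <= c <= t -> DL phi c (phi' c)).
  { intros c Hc'. destruct (Hd c ltac:(lra)) as [d0 [d1 [d2 d3]]].
    assert (Hwd : DL (fun y => g2 y - g3 y) c (A c * (g2 c - g3 c))).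
    { eapply dl_ext. apply dl_minus; eassumption. unfold A.
      replace (- b * q (g2 c) (g3 c) (g1 c) * g0 c ^ 2 * g2 c - - b * q (g3 c) (g1 c) (g2 c) * g0 c ^ 2 * g3 c)
        with (- b * g0 c ^ 2 * (q (g2 c) (g3 c) (g1 c) * g2 c - q (g3 c) (g1 c) (g2 c) * g3 c)) by ring.
      rewrite idR. ring. }
    unfold phi. eapply dl_ext. { apply dl_mult. apply dl_pow. exact Hwd.
      apply dl_exp. apply dl_mult. apply dl_const. apply dl_id. }
    unfold phi'. simpl. ring. }
  destruct (MVT_cor2 phi phi' 0 t ltac:(lra) Hphi) as [c [Hmvt Hcr]].
  assert (phi' c <= 0).
  { unfold phi'. pose proof (HM c ltac:(lra)). pose proof (exp_pos (-(2*M)*c)).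
    assert (0 <= (g2 c - g3 c)^2) by apply pow2_ge_0. 
    assert (0 <= 2*(g2 c - g3 c)^2 * exp (-(2*M)*c)) by nra. fold M in H5. nra. }
  assert (phi 0 = 0) by (unfold phi; rewrite I2, I3; ring).
  assert (Hpt : phi t <= 0) by nra.
  unfold phi in Hpt. pose proof (exp_pos (-(2*M)*t)).
  assert (0 <= (g2 t - g3 t)^2) by apply pow2_ge_0.
  assert ((g2 t - g3 t)^2 = 0) by nra.
  nra. }
assert (HP : forall t, 0 <= t -> g0 t * g1 t * g2 t * g3 t = D).
{ intros t Ht. destruct (Req_dec t 0) as [->|Ht0].
  { rewrite I0, I1, I2, I3. auto. }
  set (P := fun c => g0 c * g1 c * g2 c * g3 c).
  assert (HPd : forall c, 0 <= c <= t -> DL P c ((fun _ => 0) c)).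
  { intros c Hc'. destruct (Hd c ltac:(lra)) as [d0 [d1 [d2 d3]]].
    unfold P. eapply dl_ext. { apply dl_mult; [apply dl_mult; [apply dl_mult|]|]; eassumption. }
    unfold p, q. ring. }
  destruct (MVT_cor2 P (fun _ => 0) 0 t ltac:(lra) HPd) as [c [Hmvt _]].
  unfold P in Hmvt. rewrite I0, I1, I2, I3 in Hmvt. lra. }
assert (Hpos : forall t, 0 <= t -> 0 < g0 t /\ 0 < g1 t /\ 0 < g2 t /\ 0 < g3 t).
{ intros t Ht.
  assert (Hnz : forall c, 0 <= c <= t -> g0 c <> 0 /\ g1 c <> 0 /\ g2 c <> 0 /\ g3 c <> 0).
  { intros c Hc'. pose proof (HP c ltac:(lra)).
    repeat split; intro E; rewrite E in H; lra. }
  repeat split; apply keep_pos; auto; try lra;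
  try (intros c Hc'; apply (Hc c ltac:(lra)));
  try (intros c Hc'; apply (Hnz c Hc')). }
set (kap := (h00*h22^3 - 4*D)*h00^3*h22).
assert (HK : forall t, 0 <= t -> (g0 t * g2 t ^3 - 4*D) * g0 t ^3 * g2 t = kap).
{ intros t Ht. destruct (Req_dec t 0) as [->|Ht0].
  { rewrite I0, I2. reflexivity. }
  set (Kf := fun c => (g0 c * g2 c ^3 - 4*D) * g0 c ^3 * g2 c).
  assert (HKd : forall c, 0 <= c <= t -> DL Kf c ((fun _ => 0) c)).
  { intros c Hc'. destruct (Hd c ltac:(lra)) as [d0 [d1 [d2 d3]]].
    unfold Kf. eapply dl_ext. { dl_solve. }
    rewrite <- (HP c ltac:(lra)). rewrite <- (Heq c ltac:(lra)).
    unfold p, q. simpl. ring. }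
  destruct (MVT_cor2 Kf (fun _ => 0) 0 t ltac:(lra) HKd) as [c [Hmvt _]].
  unfold Kf in Hmvt. rewrite I0, I2 in Hmvt. unfold kap. lra. }
assert (Hkap : 0 < kap).
{ unfold kap. rewrite HDdef. 
  assert (0 < h00 * h22^2 * (h22 - 4*h11)) by (repeat apply Rmult_lt_0_compat; nra).
  assert (0 < h00^3*h22) by (apply Rmult_lt_0_compat; [apply pow_lt|]; lra).
  replace (h00 * h22 ^ 3 - 4 * (h00 * h11 * h22 * h22)) with (h00 * h22^2 * (h22 - 4*h11)) by ring.
  nra. }
assert (Hy4 : forall t, 0 <= t -> 4 * g1 t < g2 t).
{ intros t Ht. pose proof (HK t Ht) as E. pose proof (HP t Ht) as EP.
  rewrite <- (Heq t Ht) in EP. destruct (Hpos t Ht) as [p0 [p1 [p2 p3]]].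
  rewrite <- EP in E.
  replace ((g0 t * g2 t ^ 3 - 4 * (g0 t * g1 t * g2 t * g2 t)) * g0 t ^ 3 * g2 t)
    with ((g0 t ^ 4 * g2 t ^3) * (g2 t - 4 * g1 t)) in E by ring.
  assert (0 < g0 t ^ 4 * g2 t ^3) by (apply Rmult_lt_0_compat; apply pow_lt; lra).
  destruct (Rlt_le_dec (4 * g1 t) (g2 t)); auto.
  assert ((g0 t ^ 4 * g2 t ^3) * (g2 t - 4 * g1 t) <= 0).
  { assert (0 <= g0 t ^ 4 * g2 t ^3 * (4 * g1 t - g2 t)) by (apply Rmult_le_pos; lra). lra. } lra. }
assert (Hyd : forall c, 0 <= c -> 0 < - b * q (g2 c) (g3 c) (g1 c) * g0 c ^ 2 * g2 c).
{ intros c Hc'. rewrite <- (Heq c Hc'). destruct (Hpos c Hc') as [p0 [p1 [p2 p3]]].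
  pose proof (Hy4 c Hc').
  replace (- b * q (g2 c) (g2 c) (g1 c) * g0 c ^ 2 * g2 c) with
    (b * g1 c ^ 2 * (g2 c - g1 c) * (g2 c - 3 * g1 c) * g0 c ^ 2 * g2 c) by (unfold q; ring).
  assert (0 < b * g1 c ^ 2) by (apply Rmult_lt_0_compat; [lra | apply pow_lt; lra]).
  assert (0 < g0 c ^ 2) by (apply pow_lt; lra).
  repeat apply Rmult_lt_0_compat; lra. }
assert (Hinc : forall s t, 0 <= s -> s < t -> g2 s < g2 t).
{ intros s t Hs Hst.
  destruct (MVT_cor2 g2 (fun c => - b * q (g2 c) (g3 c) (g1 c) * g0 c ^ 2 * g2 c) s t Hst) as [c [Hmvt Hcr]].
  { intros c Hc'. apply (Hd c ltac:(lra)). }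
  pose proof (Hyd c ltac:(lra)). assert (0 < t - s) by lra.
  assert (0 < (- b * q (g2 c) (g3 c) (g1 c) * g0 c ^ 2 * g2 c) * (t - s)) by (apply Rmult_lt_0_compat; lra).
  lra. }
set (r := fun c => g2 c / g1 c).
set (rp := fun c => 2 * b * g0 c ^ 2 * g1 c * g2 c * (g2 c - g1 c) * (g2 c - 4 * g1 c)).
assert (Hrd : forall c, 0 <= c -> DL r c (rp c)).
{ intros c Hc'. destruct (Hd c Hc') as [d0 [d1 [d2 d3]]]. destruct (Hpos c Hc') as [p0 [p1 [p2 p3]]].
  unfold r. eapply dl_ext. { apply dl_div; [eassumption | eassumption | lra]. }
  rewrite <- (Heq c Hc'). unfold rp, q. field. lra. }
assert (Hrp : forall c, 0 <= c -> 0 < rp c).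
{ intros c Hc'. destruct (Hpos c Hc') as [p0 [p1 [p2 p3]]]. pose proof (Hy4 c Hc').
  unfold rp. assert (0 < g0 c ^2) by (apply pow_lt; lra).
  repeat apply Rmult_lt_0_compat; lra. }
set (r0 := h22 / h11).
assert (Hr0 : r 0 = r0) by (unfold r, r0; rewrite I1, I2; reflexivity).
assert (Hr04 : 4 < r0) by (unfold r0; apply (Rmult_lt_reg_r h11); [lra|]; field_simplify; lra).
assert (Hrge : forall t, 0 <= t -> r0 <= r t).
{ intros t Ht. destruct (Req_dec t 0) as [->|Ht0]; [lra|].
  destruct (MVT_cor2 r rp 0 t ltac:(lra) (fun c Hc' => Hrd c (proj1 Hc'))) as [c [Hmvt Hcr]].
  pose proof (Hrp c ltac:(lra)). assert (0 < rp c * (t - 0)) by (apply Rmult_lt_0_compat; lra). lra. }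
assert (Hr4 : forall c, 0 <= c -> rp c ^ 4 * (6^4 * D^4 * r c ^ 7) = 16 * kap * (r c - 1)^4 * (r c - 4)^3).
{ intros c Hc'. destruct (Hpos c Hc') as [p0 [p1 [p2 p3]]].
  unfold rp, r. rewrite <- (HK c Hc'). rewrite Hb. rewrite <- (HP c Hc'). rewrite <- (Heq c Hc').
  field. lra. }
set (L := 16 * kap / (6^4 * D^4) * ((r0 - 1)/r0)^4 * ((r0 - 4)/r0)^3).
assert (HL : 0 < L).
{ unfold L. assert (0 < (r0 - 1)/r0) by (apply Rdiv_lt_0_compat; lra).
  assert (0 < (r0 - 4)/r0) by (apply Rdiv_lt_0_compat; lra).
  assert (0 < 16 * kap / (6^4 * D^4)) by (apply Rdiv_lt_0_compat; [lra|]; apply Rmult_lt_0_compat; [lra | apply pow_lt; lra]).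
  apply Rmult_lt_0_compat; [apply Rmult_lt_0_compat; [lra | apply pow_lt; lra] | apply pow_lt; lra]. }
assert (HrpL : forall c, 0 <= c -> L <= rp c ^ 4).
{ intros c Hc'. pose proof (Hrge c Hc'). pose proof (Hr4 c Hc') as H5.
  assert (Hrc : 0 < r c) by lra.
  assert (E : rp c ^ 4 = 16 * kap / (6^4 * D^4) * ((r c - 1)/r c)^4 * ((r c - 4)/r c)^3).
  { apply (Rmult_eq_reg_r (6^4 * D^4 * r c ^ 7)).
    - rewrite H5. field. split; lra.
    - apply Rgt_not_eq. apply Rmult_lt_0_compat; [apply Rmult_lt_0_compat; [lra | apply pow_lt; lra] | apply pow_lt; lra]. }
  rewrite E. unfold L.
  assert (A1 : (r0 - 1)/r0 <= (r c - 1)/r c).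
  { unfold Rdiv. rewrite !Rmult_minus_distr_r, !Rinv_r by lra. 
    assert (/ r c <= / r0) by (apply Rinv_le_contravar; lra). lra. }
  assert (A2 : (r0 - 4)/r0 <= (r c - 4)/r c).
  { unfold Rdiv. rewrite !Rmult_minus_distr_r, !Rinv_r by lra. 
    assert (/ r c <= / r0) by (apply Rinv_le_contravar; lra). lra. }
  assert (0 < (r0 - 1)/r0) by (apply Rdiv_lt_0_compat; lra).
  assert (0 < (r0 - 4)/r0) by (apply Rdiv_lt_0_compat; lra).
  assert (0 < 16 * kap / (6^4 * D^4)) by (apply Rdiv_lt_0_compat; [lra|]; apply Rmult_lt_0_compat; [lra | apply pow_lt; lra]).
  apply Rmult_le_compat; [ | apply pow_le; lra | | apply pow_incr; lra].
  - apply Rmult_le_pos; [lra | apply pow_le; lra].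
  - apply Rmult_le_compat_l; [lra|]. apply pow_incr; lra. }
set (m := Rmin 1 L).
assert (Hm : 0 < m) by (unfold m; apply Rmin_pos; lra).
assert (Hrpm : forall c, 0 <= c -> m <= rp c).
{ intros c Hc'. pose proof (HrpL c Hc'). pose proof (Hrp c Hc').
  destruct (Rle_lt_dec 1 (rp c)).
  - unfold m. pose proof (Rmin_l 1 L). lra.
  - assert (rp c ^ 4 <= rp c).
    { set (u := rp c) in *. assert (u*u < 1) by nra. assert (u*u*u < 1) by nra.
      replace (u^4) with (u * (u*u*u)) by ring. nra. }
    unfold m. pose proof (Rmin_r 1 L). lra. }
assert (Hgrow : forall t, 0 <= t -> r0 + m * t <= r t).
{ intros t Ht. destruct (Req_dec t 0) as [->|Ht0]; [lra|].
  destruct (MVT_cor2 r rp 0 t ltac:(lra) (fun c Hc' => Hrd c (proj1 Hc'))) as [c [Hmvt Hcr]].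
  pose proof (Hrpm c ltac:(lra)). assert (m * t <= rp c * t) by (apply Rmult_le_compat_r; lra). lra. }
assert (Hid : forall c, 0 <= c ->
   g1 c ^ 8 * kap * r c ^ 5 = D^4 * (r c - 4) /\ g2 c ^ 8 * kap = D^4 * r c ^ 3 * (r c - 4) /\ g0 c ^ 8 * (D^4 * r c * (r c - 4)^3) = kap^3).
{ intros c Hc'. destruct (Hpos c Hc') as [p0 [p1 [p2 p3]]].
  unfold r. rewrite <- (HK c Hc'). rewrite <- (HP c Hc'). rewrite <- (Heq c Hc').
  repeat split; field; lra. }
assert (Hev := eventually_big r r0 m Hm Hgrow).
assert (Hr0p : 0 < r0) by lra.
split; [exact Heq|]. split; [exact Hinc|]. split.
{ intros s t Hs Hst. rewrite <- (Heq s Hs), <- (Heq t ltac:(lra)). auto. }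
split.
{
  intros eps Heps. assert (He8 : 0 < eps^8) by (apply pow_lt; lra).
  assert (Hd3 : 0 < (r0-4)^3) by (apply pow_lt; lra).
  assert (HD4 : 0 < D^4) by (apply pow_lt; lra).
  destruct (Hev (kap^3 / (D^4 * (r0-4)^3 * eps^8))) as [T HT].
  exists T. intros t Ht. destruct (HT t Ht) as [Ht0 HB].
  destruct (Hpos t Ht0) as [p0 _]. destruct (Hid t Ht0) as [_ [_ E]].
  pose proof (Hrge t Ht0).
  unfold Rminus; rewrite Ropp_0, Rplus_0_r, Rabs_right by lra.
  apply pow8_lt; auto.
  assert (Hq3 : (r0-4)^3 <= (r t - 4)^3) by (apply pow_incr; lra).
  assert (HQ : 0 < D^4 * r t * (r t - 4)^3).
  { apply Rmult_lt_0_compat; [apply Rmult_lt_0_compat; lra | apply pow_lt; lra]. }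
  apply (Rmult_lt_reg_r (D^4 * r t * (r t - 4)^3)); auto. rewrite E.
  assert (Hk3 : kap^3 = kap^3 / (D^4 * (r0-4)^3 * eps^8) * (D^4 * (r0-4)^3 * eps^8)) by (field; repeat split; lra).
  assert (0 < D^4 * (r0-4)^3 * eps^8) by (repeat apply Rmult_lt_0_compat; lra).
  assert (kap^3 < r t * (D^4 * (r0-4)^3 * eps^8)).
  { rewrite Hk3 at 1. apply Rmult_lt_compat_r; lra. }
  assert (r t * (D^4 * (r0-4)^3 * eps^8) <= eps^8 * (D^4 * r t * (r t - 4)^3)).
  { replace (r t * (D^4 * (r0-4)^3 * eps^8)) with ((eps^8 * D^4 * r t) * (r0-4)^3) by ring.
    replace (eps^8 * (D^4 * r t * (r t - 4)^3)) with ((eps^8 * D^4 * r t) * (r t - 4)^3) by ring.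
    apply Rmult_le_compat_l; [|lra]. apply Rmult_le_pos; [apply Rmult_le_pos|]; lra. }
  lra. }
split.
{
  intros eps Heps. assert (He8 : 0 < eps^8) by (apply pow_lt; lra).
  assert (HD4 : 0 < D^4) by (apply pow_lt; lra).
  destruct (Hev (D^4 / (kap * eps^8))) as [T HT].
  exists T. intros t Ht. destruct (HT t Ht) as [Ht0 HB].
  destruct (Hpos t Ht0) as [_ [p1 _]]. destruct (Hid t Ht0) as [E _].
  pose proof (Hrge t Ht0).
  unfold Rminus; rewrite Ropp_0, Rplus_0_r, Rabs_right by lra.
  apply pow8_lt; auto.
  assert (Hr5 : 0 < kap * r t ^ 5) by (apply Rmult_lt_0_compat; [lra | apply pow_lt; lra]).
  apply (Rmult_lt_reg_r (kap * r t ^ 5)); auto. rewrite <- Rmult_assoc, E.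
  assert (r t <= r t ^ 4).
  { replace (r t ^ 4) with (r t * (r t ^ 3)) by ring.
    assert (1 <= r t ^ 3) by (replace 1 with (1^3) by ring; apply pow_incr; lra). nra. }
  assert (D^4 < kap * eps^8 * r t).
  { assert (Hk3 : D^4 = D^4 / (kap * eps^8) * (kap * eps^8)) by (field; split; lra).
    assert (0 < kap * eps^8) by (apply Rmult_lt_0_compat; lra).
    rewrite Hk3 at 1. rewrite (Rmult_comm (kap * eps^8)). apply Rmult_lt_compat_r; lra. }
  assert (kap * eps^8 * r t <= kap * eps^8 * r t ^ 4).
  { apply Rmult_le_compat_l; [|lra]. apply Rmult_le_pos; lra. }
  replace (eps ^ 8 * (kap * r t ^ 5)) with ((kap * eps^8 * r t ^ 4) * r t) by ring.
  assert (D^4 * r t < (kap * eps^8 * r t ^ 4) * r t) by (apply Rmult_lt_compat_r; lra).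
  nra. }
assert (Hinf : tends_to_pinfty g2).
{ intros M. destruct (Rle_lt_dec M 0) as [HM|HM].
  - exists 0. intros t Ht. destruct (Hpos t Ht) as [_ [_ [p2 _]]]. lra.
  - assert (HD4 : 0 < D^4) by (apply pow_lt; lra).
    assert (Hr3 : 0 < D^4 * r0^3) by (apply Rmult_lt_0_compat; [lra | apply pow_lt; lra]).
    destruct (Hev (4 + M^8 * kap / (D^4 * r0^3))) as [T HT].
    exists T. intros t Ht. destruct (HT t Ht) as [Ht0 HB].
    destruct (Hpos t Ht0) as [_ [_ [p2 _]]]. destruct (Hid t Ht0) as [_ [E _]].
    pose proof (Hrge t Ht0).
    apply pow8_lt; auto.
    apply (Rmult_lt_reg_r kap); auto. rewrite E.
    assert (Hk3 : M^8 * kap = M^8 * kap / (D^4 * r0^3) * (D^4 * r0^3)) by (field; lra).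
    assert (M^8 * kap / (D^4 * r0^3) < r t - 4) by lra.
    assert (M^8 * kap < (r t - 4) * (D^4 * r0^3)).
    { rewrite Hk3 at 1. apply Rmult_lt_compat_r; lra. }
    assert (r0^3 <= r t ^3) by (apply pow_incr; lra).
    assert ((r t - 4) * (D^4 * r0^3) <= D^4 * r t ^ 3 * (r t - 4)).
    { replace ((r t - 4) * (D^4 * r0^3)) with (((r t - 4) * D^4) * r0^3) by ring.
      replace (D^4 * r t ^ 3 * (r t - 4)) with (((r t - 4) * D^4) * r t ^3) by ring.
      apply Rmult_le_compat_l; [apply Rmult_le_pos|]; lra. }
    lra. }
split; [exact Hinf|]. split.
{ intros M. destruct (Hinf M) as [T HT]. exists (Rmax T 0). intros t Ht.
  pose proof (Rmax_l T 0). pose proof (Rmax_r T 0).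
  rewrite <- (Heq t ltac:(lra)). apply HT. lra. }
intros t Ht. rewrite (HK t Ht). reflexivity.
Qed.
Theorem theorem5p19 (h00 h11 h22 h33 : R) :
  0 < h00 -> 0 < h11 -> 0 < h22 -> 0 < h33 ->
  4 * h11 < h22 -> h22 = h33 ->
  (* the solution exists for all t >= 0 *)
  (exists g0 g1 g2 g3 : R -> R, solves_S3_on_nonneg h00 h11 h22 h33 g0 g1 g2 g3) /\
  (* and any such solution has the stated properties *)
  (forall g0 g1 g2 g3 : R -> R,
     solves_S3_on_nonneg h00 h11 h22 h33 g0 g1 g2 g3 ->
     (forall t, 0 <= t -> g2 t = g3 t) /\
     (forall s t, 0 <= s -> s < t -> g2 s < g2 t) /\
     (forall s t, 0 <= s -> s < t -> g3 s < g3 t) /\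
     tends_to_at_infty g0 0 /\
     tends_to_at_infty g1 0 /\
     tends_to_pinfty g2 /\
     tends_to_pinfty g3 /\
     (forall t, 0 <= t ->
        (g0 t * (g2 t)^3 - 4 * deth h00 h11 h22 h33) * (g0 t)^3 * g2 t
        = (h00 * h22^3 - 4 * deth h00 h11 h22 h33) * h00^3 * h22)).
Proof.
intros H0 H1 H2 H3 H4 H5. split.
- apply existence; auto.
- intros g0 g1 g2 g3 Hs. subst h33. apply universal; auto.
Qed.
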